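(* Let $\mathcal H\subseteq\mathrm{Hol}(\mathbb B_d,\mathbb C^n)$ be a reproducing kernel Hilbert space in which the $\mathbb C^n$-valued polynomials are dense, and suppose $\langle\boldsymbol z^\alpha\otimes\boldsymbol\xi,\boldsymbol z^\beta\otimes\boldsymbol\eta\rangle=0$ for all $\alpha\ne\beta$ in $\mathbb Z_+^d$ and all $\boldsymbol\xi,\boldsymbol\eta\in\mathbb C^n$. If the $d$-tuple $\boldsymbol M$ of multiplication by the coordinate functions on $\mathcal H$ is $\mathcal U(d)$-homogeneous, then there is a sequence $\{A_\ell\}_{\ell\in\mathbb Z_+}$ of positive definite $n\times n$ matrices such that $$\|\boldsymbol z^\alpha\otimes\boldsymbol\xi\|^2=\alpha!\,\langle A_{|\alpha|}\boldsymbol\xi,\boldsymbol\xi\rangle,\qquad\alpha\in\mathbb Z_+^d,\ \boldsymbol\xi\in\mathbb C^n.$$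
   Context: $\mathbb B_d$ is the unit ball of $\mathbb C^d$, $\boldsymbol z^\alpha\otimes\boldsymbol\xi$ denotes the function $\boldsymbol z\mapsto\boldsymbol z^\alpha\boldsymbol\xi$, $\alpha!=\alpha_1!\cdots\alpha_d!$, $|\alpha|=\alpha_1+\cdots+\alpha_d$. The (bounded, commuting) tuple $\boldsymbol M=(M_{z_1},\ldots,M_{z_d})$ is $\mathcal U(d)$-homogeneous if for every $u=(u_{jk})\in\mathcal U(d)$ there is a unitary $\Gamma(u)$ on $\mathcal H$ with $M_{z_j}\Gamma(u)=\Gamma(u)\sum_{k}u_{jk}M_{z_k}$ for $j=1,\ldots,d$. *)

(* Defs.v *)
From HB Require Import structures.
From mathcomp Require Import all_boot all_order all_algebra.
From mathcomp Require Import reals.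
From mathcomp Require Import complex.
Set Implicit Arguments.
Unset Strict Implicit.
Unset Printing Implicit Defensive.
Import Order.TTheory GRing.Theory Num.Theory.
Local Open Scope ring_scope.

Section Defs.
Variables (R : realType) (d n : nat).
Local Notation C := (R[i]).

Definition point := 'rV[C]_d.
(* functions B_d -> C^n, represented as total functions that vanish off B_d *)
Definition Fun := point -> 'cV[C]_n.

Definition in_ball (z : point) : bool := \sum_(j < d) `|z 0 j| ^+ 2 < 1.

Definition ext0 (g : Fun) : Fun := fun z => if in_ball z then g z else 0.

Definition mindex := 'I_d -> nat.
Definition mfact (a : mindex) : nat := \prod_(j < d) (a j)`!.
Definition mdeg (a : mindex) : nat := \sum_(j < d) a j.
Definition zpow (z : point) (a : mindex) : C := \prod_(j < d) (z 0 j) ^+ (a j).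

Definition monom (a : mindex) (xi : 'cV[C]_n) : Fun :=
  ext0 (fun z => zpow z a *: xi).

Definition is_poly (f : Fun) : Prop :=
  exists s : seq (mindex * 'cV[C]_n),
    f = ext0 (fun z => \sum_(p <- s) zpow z p.1 *: p.2).

Definition cdot (x y : 'cV[C]_n) : C := \sum_(i < n) x i 0 * (y i 0)^*.

Definition adj {k m : nat} (A : 'M[C]_(k, m)) : 'M[C]_(m, k) := (map_mx Num.conj A)^T.

Definition posdef (A : 'M[C]_n) : Prop :=
  adj A = A /\ forall xi : 'cV[C]_n, xi != 0 -> 0 < cdot (A *m xi) xi.

Definition unitary_mx (u : 'M[C]_d) : Prop := u *m adj u = 1%:M /\ adj u *m u = 1%:M.

Definition holo (f : Fun) : Prop :=
  forall z : point, in_ball z -> forall i : 'I_n,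
    exists L : 'rV[C]_d, forall eps : C, 0 < eps -> exists2 delta : C, 0 < delta &
      forall h : point, \sum_(j < d) `|h 0 j| < delta ->
        `|f (z + h) i 0 - f z i 0 - \sum_(j < d) L 0 j * h 0 j|
          <= eps * \sum_(j < d) `|h 0 j|.

Definition Mz (j : 'I_d) (f : Fun) : Fun := fun z => z 0 j *: f z.

Definition is_RKHS_hol (S : Fun -> Prop) (ip : Fun -> Fun -> C) : Prop :=
  [/\
      [/\ S (fun _ => 0),
      (forall a f g, S f -> S g -> S (fun z => a *: f z + g z)) &
      (forall f, S f -> holo f /\ forall z, ~~ in_ball z -> f z = 0)],
      [/\ (forall a f g h, S f -> S g -> S h ->
             ip (fun z => a *: f z + g z) h = a * ip f h + ip g h),
          (forall f g, S f -> S g -> ip g f = (ip f g)^*) &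
          (forall f, S f -> f <> (fun _ => 0) -> 0 < ip f f)],
      (forall u : nat -> Fun, (forall m, S (u m)) ->
        (forall eps : C, 0 < eps -> exists N, forall m k, (N <= m)%N -> (N <= k)%N ->
           ip (fun z => u m z - u k z) (fun z => u m z - u k z) < eps) ->
        exists2 g, S g & forall eps : C, 0 < eps -> exists N, forall m, (N <= m)%N ->
           ip (fun z => u m z - g z) (fun z => u m z - g z) < eps) &
      exists K : point -> point -> 'M[C]_n,
        forall w : point, in_ball w -> forall xi : 'cV[C]_n,
          S (ext0 (fun z => K z w *m xi)) /\
          forall f, S f -> ip f (ext0 (fun z => K z w *m xi)) = cdot (f w) xi].

Definition poly_dense (S : Fun -> Prop) (ip : Fun -> Fun -> C) : Prop :=
  (forall f, is_poly f -> S f) /\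
  forall f, S f -> forall eps : C, 0 < eps -> exists2 p, is_poly p &
    ip (fun z => f z - p z) (fun z => f z - p z) < eps.

Definition M_bounded (S : Fun -> Prop) (ip : Fun -> Fun -> C) : Prop :=
  forall j : 'I_d, (forall f, S f -> S (Mz j f)) /\
    exists c : C, forall f, S f -> ip (Mz j f) (Mz j f) <= c * ip f f.

Definition unitary_op (S : Fun -> Prop) (ip : Fun -> Fun -> C) (G : Fun -> Fun) : Prop :=
  [/\ (forall f, S f -> S (G f)),
      (forall a f g, S f -> S g -> G (fun z => a *: f z + g z) = (fun z => a *: G f z + G g z)),
      (forall f g, S f -> S g -> ip (G f) (G g) = ip f g) &
      (forall g, S g -> exists2 f, S f & G f = g)].

Definition Ud_homogeneous (S : Fun -> Prop) (ip : Fun -> Fun -> C) : Prop :=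
  forall u : 'M[C]_d, unitary_mx u ->
    exists G : Fun -> Fun, unitary_op S ip G /\
      forall (j : 'I_d) f, S f ->
        Mz j (G f) = G (fun z => \sum_(k < d) u j k *: Mz k f z).

End Defs.

(* Main.v *)
Require Import Defs.
From HB Require Import structures.
From mathcomp Require Import all_boot all_order all_algebra.
From mathcomp Require Import reals.
From mathcomp Require Import complex.
From mathcomp Require Import ring zify.
From Stdlib Require Import FunctionalExtensionality Classical.
Import Order.TTheory GRing.Theory Num.Theory.
Local Open Scope ring_scope.

Set Implicit Arguments.
Unset Strict Implicit.
Unset Printing Implicit Defensive.

Lemma fext {A B : Type} (f g : A -> B) : (forall x, f x = g x) -> f = g.
Proof. exact: functional_extensionality. Qed.

Section Main.
Variables (R : realType) (d n : nat).
Local Notation C := (R[i]).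
Local Notation Fn := (Fun R d n).
Local Notation pt := (point R d).
Variables (S : Fn -> Prop) (ip : Fn -> Fn -> C).
Hypothesis HS : is_RKHS_hol S ip.
Hypothesis Hdense : poly_dense S ip.
Hypothesis Horth : forall (a b : mindex d) (xi eta : 'cV[C]_n), a <> b ->
     ip (monom a xi) (monom b eta) = 0.
Hypothesis Hbdd : M_bounded S ip.
Hypothesis Hhom : Ud_homogeneous S ip.

Lemma S0 : S (fun _ => 0).
Proof. by case: HS => [[]]. Qed.
Lemma Slin a f g : S f -> S g -> S (fun z => a *: f z + g z).
Proof. by case: HS => [[_ H _]] *; apply: H. Qed.
Lemma iplin a f g h : S f -> S g -> S h ->
  ip (fun z => a *: f z + g z) h = a * ip f h + ip g h.
Proof. by case: HS => _ [H _ _] *; apply: H. Qed.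
Lemma ipsym f g : S f -> S g -> ip g f = (ip f g)^*.
Proof. by case: HS => _ [_ H _] *; apply: H. Qed.
Lemma ippos f : S f -> f <> (fun _ => 0) -> 0 < ip f f.
Proof. by case: HS => _ [_ _ H] *; apply: H. Qed.
Lemma kern0 : exists k0 : 'cV[C]_n -> Fn, forall eta,
  S (k0 eta) /\ forall f, S f -> ip f (k0 eta) = cdot (f 0) eta.
Proof.
case: HS => _ _ _ [K HK].
have b0 : in_ball (0 : pt).
  rewrite /in_ball big1 ?ltr01 // => j _; by rewrite mxE normr0 expr0n.
exists (fun eta => ext0 (fun z => K z 0 *m eta)) => eta.
exact: HK.
Qed.

Lemma in_ball0 : in_ball (0 : pt).
Proof. rewrite /in_ball big1 ?ltr01 // => j _; by rewrite mxE normr0 expr0n. Qed.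

Lemma Ssc a f : S f -> S (fun z => a *: f z).
Proof.
move=> Sf; have -> : (fun z => a *: f z) = (fun z => a *: f z + (fun _ => 0) z).
  by apply: fext => z; rewrite addr0.
exact: Slin Sf S0.
Qed.
Lemma Sadd f g : S f -> S g -> S (fun z => f z + g z).
Proof.
move=> Sf Sg; have -> : (fun z => f z + g z) = (fun z => 1 *: f z + g z).
  by apply: fext => z; rewrite scale1r.
exact: Slin.
Qed.
Lemma Ssub f g : S f -> S g -> S (fun z => f z - g z).
Proof.
move=> Sf Sg; have -> : (fun z => f z - g z) = (fun z => (-1) *: g z + f z).
  by apply: fext => z; rewrite scaleN1r addrC.
exact: Slin.
Qed.

Lemma ip0l h : S h -> ip (fun _ => 0) h = 0.
Proof.
move=> Sh; have := iplin 1 S0 S0 Sh.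
have -> : (fun z : pt => 1 *: (fun _ => 0 : 'cV[C]_n) z + (fun _ => 0) z) = (fun _ => 0).
  by apply: fext => z; rewrite scale1r addr0.
rewrite mul1r => H; apply: (addrI (ip (fun _ => 0) h)); by rewrite addr0 -H.
Qed.
Lemma ip0r h : S h -> ip h (fun _ => 0) = 0.
Proof. by move=> Sh; rewrite ipsym ?ip0l ?conjC0 //; exact: S0. Qed.

Lemma iplinr a f g h : S f -> S g -> S h ->
  ip h (fun z => a *: f z + g z) = a^* * ip h f + ip h g.
Proof.
move=> Sf Sg Sh; rewrite ipsym ?iplin //; last exact: Slin.
by rewrite rmorphD rmorphM /= -!ipsym.
Qed.

Lemma ipscl a f h : S f -> S h -> ip (fun z => a *: f z) h = a * ip f h.
Proof.
move=> Sf Sh; have -> : (fun z => a *: f z) = (fun z => a *: f z + (fun _ => 0) z).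
  by apply: fext => z; rewrite addr0.
by rewrite iplin ?ip0l ?addr0 //; exact: S0.
Qed.
Lemma ipadd f g h : S f -> S g -> S h -> ip (fun z => f z + g z) h = ip f h + ip g h.
Proof.
move=> Sf Sg Sh; have -> : (fun z => f z + g z) = (fun z => 1 *: f z + g z).
  by apply: fext => z; rewrite scale1r.
by rewrite iplin // mul1r.
Qed.
Lemma ipsub f g h : S f -> S g -> S h -> ip (fun z => f z - g z) h = ip f h - ip g h.
Proof.
move=> Sf Sg Sh; have -> : (fun z => f z - g z) = (fun z => (-1) *: g z + f z).
  by apply: fext => z; rewrite scaleN1r addrC.
by rewrite iplin // mulN1r addrC.
Qed.
Lemma ipsubr f g h : S f -> S g -> S h -> ip h (fun z => f z - g z) = ip h f - ip h g.
Proof.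
move=> Sf Sg Sh; rewrite ipsym ?ipsub ?rmorphB /= -?ipsym //; exact: Ssub.
Qed.
Lemma ipaddr f g h : S f -> S g -> S h -> ip h (fun z => f z + g z) = ip h f + ip h g.
Proof.
move=> Sf Sg Sh; rewrite ipsym ?ipadd ?rmorphD /= -?ipsym //; exact: Sadd.
Qed.
Lemma ipsclr a f h : S f -> S h -> ip h (fun z => a *: f z) = a^* * ip h f.
Proof.
move=> Sf Sh; rewrite ipsym ?ipscl ?rmorphM /= -?ipsym //; exact: Ssc.
Qed.

Lemma Ssum (I : Type) (r : seq I) (c : I -> C) (F : I -> Fn) :
  (forall i, S (F i)) -> S (fun z => \sum_(i <- r) c i *: F i z).
Proof.
move=> SF; elim: r => [|i r IH].
  have -> : (fun z : pt => \sum_(i <- [::]) c i *: F i z) = (fun _ => 0).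
    by apply: fext => z; rewrite big_nil.
  exact: S0.
have -> : (fun z => \sum_(j <- i :: r) c j *: F j z) =
  (fun z => c i *: F i z + (fun z => \sum_(j <- r) c j *: F j z) z).
  by apply: fext => z; rewrite big_cons.
exact: Slin.
Qed.

Lemma ipsum (I : Type) (r : seq I) (c : I -> C) (F : I -> Fn) h :
  (forall i, S (F i)) -> S h ->
  ip (fun z => \sum_(i <- r) c i *: F i z) h = \sum_(i <- r) c i * ip (F i) h.
Proof.
move=> SF Sh; elim: r => [|i r IH].
  have -> : (fun z : pt => \sum_(i <- [::]) c i *: F i z) = (fun _ => 0).
    by apply: fext => z; rewrite big_nil.
  by rewrite ip0l // big_nil.
have -> : (fun z => \sum_(j <- i :: r) c j *: F j z) =
  (fun z => c i *: F i z + (fun z => \sum_(j <- r) c j *: F j z) z).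
  by apply: fext => z; rewrite big_cons.
by rewrite iplin ?IH ?big_cons //; exact: Ssum.
Qed.

Lemma ipsumr (I : Type) (r : seq I) (c : I -> C) (F : I -> Fn) h :
  (forall i, S (F i)) -> S h ->
  ip h (fun z => \sum_(i <- r) c i *: F i z) = \sum_(i <- r) (c i)^* * ip h (F i).
Proof.
move=> SF Sh; have SS := Ssum r c SF.
rewrite (ipsym SS Sh) ipsum // rmorph_sum.
by apply: eq_bigr => i _; rewrite rmorphM (ipsym (SF i) Sh).
Qed.

Lemma ip_ge0 f : S f -> 0 <= ip f f.
Proof.
move=> Sf; case: (classic (f = fun _ => 0)) => [->|nf].
  by rewrite ip0l //; exact: S0.
exact/ltW/ippos.
Qed.


Definition addm (a : mindex d) (k : 'I_d) : mindex d := fun l => (a l + (l == k))%N.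
Definition E (q : pt -> C) (xi : 'cV[C]_n) : Fn := ext0 (fun z => q z *: xi).

Lemma zpow_addm (z : pt) a k : zpow z (addm a k) = z 0 k * zpow z a.
Proof.
rewrite /zpow (bigD1 k) //= [in RHS](bigD1 k) //= /addm eqxx addn1 exprS -mulrA.
congr (_ * _); congr (_ * _); apply: eq_bigr => l /negPf ->; by rewrite addn0.
Qed.

Lemma Mz_E k q xi : Mz k (E q xi) = E (fun z => z 0 k * q z) xi.
Proof.
apply: fext => z; rewrite /Mz /E /ext0; case: (in_ball z); by rewrite ?scalerA ?scaler0.
Qed.

Lemma Mz_monom k a (xi : 'cV[C]_n) : Mz k (monom a xi) = monom (addm a k) xi.
Proof.
rewrite /monom -/(E _ _) Mz_E /E; congr ext0; apply: fext => z; by rewrite zpow_addm.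
Qed.

Lemma E_lin a q1 q2 xi : E (fun z => a * q1 z + q2 z) xi = fun z => a *: E q1 xi z + E q2 xi z.
Proof.
apply: fext => z; rewrite /E /ext0; case: (in_ball z); last by rewrite scaler0 addr0.
by rewrite scalerDl scalerA.
Qed.

Definition SP (q : pt -> C) := forall xi, S (E q xi).

Lemma Smonom a (xi : 'cV[C]_n) : S (monom a xi).
Proof.
apply: Hdense.1; exists [:: (a, xi)]; rewrite /monom; congr ext0.
by apply: fext => z; rewrite big_seq1.
Qed.

Lemma SP_monom a : SP (fun z => zpow z a).
Proof. move=> xi; exact: Smonom. Qed.

Lemma SP_mul k q : SP q -> SP (fun z => z 0 k * q z).
Proof. move=> Hq xi; rewrite -Mz_E; apply: (Hbdd k).1; exact: Hq. Qed.

Lemma SP_lin a q1 q2 : SP q1 -> SP q2 -> SP (fun z => a * q1 z + q2 z).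
Proof. move=> H1 H2 xi; rewrite E_lin; exact: Slin. Qed.

Lemma vanish f : S f -> (forall a eta, ip f (monom a eta) = 0) -> f = fun _ => 0.
Proof.
move=> Sf Hf.
have Hp : forall p, is_poly p -> ip f p = 0.
  move=> p [s ->].
  have -> : ext0 (fun z : pt => \sum_(q <- s) zpow z q.1 *: q.2) =
     (fun z => \sum_(q <- s) 1 *: monom q.1 q.2 z).
    apply: fext => z; rewrite /monom /ext0; case: (in_ball z).
      by apply: eq_bigr => q _; rewrite scale1r.
    by rewrite big1 // => q _; rewrite scaler0.
  rewrite ipsumr //; last by move=> q; exact: Smonom.
  by rewrite big1 // => q _; rewrite Hf mulr0.
apply: NNPP => nf.
have pos := ippos Sf nf.
have [p pp] := Hdense.2 f Sf (ip f f) pos.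
have Sp : S p := Hdense.1 p pp.
rewrite ipsub ?ipsubr ?(Hp p pp) //; try exact: Ssub.
rewrite (ipsym Sf Sp) (Hp p pp) conjC0 subr0 sub0r opprK gtrDl => H.
by have := lt_le_trans H (ip_ge0 Sp); rewrite ltxx.
Qed.

Definition ev (j : 'I_n) : 'cV[C]_n := delta_mx j 0.
Definition Bmat (a : mindex d) : 'M[C]_n :=
  \matrix_(i, j) ip (monom a (ev j)) (monom a (ev i)).

Lemma vec_dec (xi : 'cV[C]_n) : xi = \sum_(j < n) xi j 0 *: ev j.
Proof.
rewrite {1}(matrix_sum_delta xi); apply: eq_bigr => j _; by rewrite big_ord1.
Qed.

Lemma monom_dec (a : mindex d) (xi : 'cV[C]_n) :
  monom a xi = fun z => \sum_(j < n) xi j 0 *: monom a (ev j) z.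
Proof.
apply: fext => z; rewrite /monom /ext0; case: (in_ball z).
  rewrite {1}(vec_dec xi) scaler_sumr; apply: eq_bigr => j _.
  by rewrite !scalerA mulrC.
by rewrite big1 // => j _; rewrite scaler0.
Qed.

Lemma Brep (a : mindex d) (xi eta : 'cV[C]_n) :
  ip (monom a xi) (monom a eta) = cdot (Bmat a *m xi) eta.
Proof.
rewrite [X in ip X _](monom_dec a xi) ipsum; last 2 first.
- by move=> j; exact: Smonom.
- exact: Smonom.
rewrite /cdot.
under [RHS]eq_bigr do rewrite mxE mulr_suml.
rewrite [RHS]exchange_big; apply: eq_bigr => j _.
rewrite (monom_dec a eta) ipsumr; last 2 first.
- by move=> i; exact: Smonom.
- exact: Smonom.
rewrite mulr_sumr; apply: eq_bigr => i _; rewrite mxE; ring.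
Qed.

Lemma cdot_adj (A : 'M[C]_n) (x y : 'cV[C]_n) : cdot (A *m x) y = cdot x (adj A *m y).
Proof.
rewrite /cdot /adj.
under eq_bigr do rewrite mxE mulr_suml.
rewrite exchange_big; apply: eq_bigr => i _.
rewrite mxE rmorph_sum mulr_sumr; apply: eq_bigr => k _.
rewrite !mxE rmorphM /= conjCK; ring.
Qed.

Lemma ball_pt : exists z : pt, in_ball z /\ forall j, z 0 j != 0.
Proof.
pose c : C := ((d.+1)%:R)^-1.
have c0 : 0 < c by rewrite invr_gt0 ltr0n.
exists (const_mx c); split; last by move=> j; rewrite mxE gt_eqF.
rewrite /in_ball.
under eq_bigr do rewrite mxE (ger0_norm (ltW c0)).
rewrite sumr_const card_ord /c exprVn -[_ *+ d]mulr_natl ltr_pdivrMr ?mul1r.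
  by rewrite -natrX ltr_nat (expnS _ 1) expn1; nia.
by apply: exprn_gt0; rewrite ltr0n.
Qed.

Lemma monom_neq0 (a : mindex d) (xi : 'cV[C]_n) : xi != 0 -> monom a xi <> fun _ => 0.
Proof.
move=> xi0 H; have [z [zb zn0]] := ball_pt.
have := congr1 (fun f => f z) H; rewrite /monom /ext0 zb => /eqP.
rewrite scaler_eq0 (negPf xi0) orbF => /eqP; apply/eqP.
rewrite /zpow; apply/prodf_neq0 => j _; exact: expf_neq0.
Qed.

Lemma Bpos a : posdef (Bmat a).
Proof.
split.
  apply/matrixP => i j; rewrite /adj !mxE.
  by rewrite -ipsym //; exact: Smonom.
move=> xi xi0; rewrite -Brep; apply: ippos; first exact: Smonom.
exact: monom_neq0.
Qed.

Lemma Bunit a : Bmat a \in unitmx.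
Proof.
rewrite -unitmx_tr -row_free_unit; apply: inj_row_free => v Hv.
have H0 : Bmat a *m v^T = 0 by rewrite -[Bmat a]trmxK -trmx_mul Hv trmx0.
apply/eqP; rewrite -[v]trmxK -[0]trmx0; apply/eqP; congr trmx.
apply/eqP; apply: contraT => nz.
have := (Bpos a).2 _ nz; by rewrite H0 /cdot big1 ?ltxx // => i _; rewrite mxE mul0r.
Qed.

Definition z0a : mindex d := fun _ => 0%N.
Definition B0 := Bmat z0a.

Lemma zpow_z0 (z : pt) : zpow z z0a = 1.
Proof. by rewrite /zpow big1 // => j _; rewrite expr0. Qed.

Lemma e_at0 (xi : 'cV[C]_n) : monom z0a xi 0 = xi.
Proof. by rewrite /monom /ext0 in_ball0 zpow_z0 scale1r. Qed.

Lemma nz0_ex (a : mindex d) : a <> z0a -> exists k, a k <> 0%N.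
Proof.
move=> az; apply: NNPP => H; apply: az; apply: fext => k.
by apply: NNPP => H2; apply: H; exists k.
Qed.

Lemma monom_at0 (a : mindex d) (xi : 'cV[C]_n) : a <> z0a -> monom a xi 0 = 0.
Proof.
move=> /nz0_ex [k ak]; rewrite /monom /ext0 in_ball0 /zpow (bigD1 k) //= mxE.
by rewrite expr0n; move/eqP: ak => /negPf ->; rewrite mul0r scale0r.
Qed.

Lemma cdot_conj (x y : 'cV[C]_n) : (cdot x y)^* = cdot y x.
Proof.
rewrite /cdot rmorph_sum; apply: eq_bigr => i _; by rewrite rmorphM /= conjCK mulrC.
Qed.

Lemma cdot0l (y : 'cV[C]_n) : cdot 0 y = 0.
Proof. by rewrite /cdot big1 // => i _; rewrite mxE mul0r. Qed.

Lemma ip_e F (zeta : 'cV[C]_n) : S F -> ip F (monom z0a zeta) = cdot (F 0) (B0 *m zeta).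
Proof.
move=> SF; have [k0 Hk] := kern0.
have kc : forall eta, k0 eta = monom z0a (invmx B0 *m eta).
  move=> eta; have [Sk Rk] := Hk eta.
  set w := invmx B0 *m eta.
  have Sw : S (monom z0a w) by exact: Smonom.
  have := @vanish (fun z => k0 eta z - monom z0a w z) (Ssub Sk Sw).
  have key : forall a zeta, ip (fun z => k0 eta z - monom z0a w z) (monom a zeta) = 0.
    move=> a zt; have Sm := Smonom a zt.
    rewrite ipsub //.
    case: (classic (a = z0a)) => [az|az]; first subst a.
      rewrite (ipsym Sm Sk) Rk // e_at0 Brep /w mulmxA mulmxV ?Bunit // mul1mx.
      by rewrite cdot_conj subrr.
    rewrite (ipsym Sm Sk) Rk // monom_at0 // cdot0l conjC0 Horth ?subrr //.
    by move=> h; apply: az.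
  move=> /(_ key) H; apply: fext => z.
  by have := congr1 (fun f => f z) H => /= /eqP; rewrite subr_eq0 => /eqP.
have [_ Rk] := Hk (B0 *m zeta).
by rewrite -Rk // kc mulmxA mulVmx ?Bunit // mul1mx.
Qed.

Lemma perp0 F (xi : 'cV[C]_n) : S F -> F 0 = 0 -> ip F (monom z0a xi) = 0.
Proof. by move=> SF F0; rewrite ip_e // F0 cdot0l. Qed.

Lemma perp0' F (xi : 'cV[C]_n) : S F -> F 0 = 0 -> ip (monom z0a xi) F = 0.
Proof.
move=> SF F0; rewrite (ipsym SF) ?perp0 ?conjC0 //; exact: Smonom.
Qed.

Lemma Gconst (u : 'M[C]_d) (G : Fn -> Fn) : unitary_op S ip G ->
  (forall j f, S f -> Mz j (G f) = G (fun z => \sum_(k < d) u j k *: Mz k f z)) ->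
  forall xi, G (monom z0a xi) = monom z0a (G (monom z0a xi) 0).
Proof.
move=> [GS Glin Giso Gsurj] Hh xi.
set h := G (monom z0a xi); set h0 := h 0.
have Sh : S h by apply: GS; exact: Smonom.
have Se : S (monom z0a h0) by exact: Smonom.
have := @vanish (fun z => h z - monom z0a h0 z) (Ssub Sh Se).
have key : forall a zeta, ip (fun z => h z - monom z0a h0 z) (monom a zeta) = 0.
  move=> a zt; have Sm := Smonom a zt; rewrite ipsub //.
  case: (classic (a = z0a)) => [az|az]; first subst a.
    rewrite ip_e // Brep cdot_adj (Bpos z0a).1 -/B0 subrr //.
  rewrite Horth; last by move=> H; apply: az.
  have [k ak] := nz0_ex az.
  pose a' : mindex d := fun l => (a l - (l == k))%N.
  have -> : a = addm a' k.
    apply: fext => l; rewrite /addm /a'; case: eqP => [->|]; last by rewrite !subn0 addn0.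
    by rewrite subn1 addn1 prednK // lt0n; apply/eqP.
  rewrite -Mz_monom.
  have [g' Sg' Gg'] := Gsurj _ (Smonom a' zt).
  have SF : S (fun z => \sum_(l < d) u k l *: Mz l g' z).
    by apply: Ssum => l; apply: (Hbdd l).1.
  rewrite -Gg' Hh // Giso ?perp0' ?subr0 //. all: try exact: Smonom. 
  rewrite big1 // => l _; by rewrite /Mz mxE scale0r scaler0.
move=> /(_ key) H; apply: fext => z.
by have := congr1 (fun f => f z) H => /= /eqP; rewrite subr_eq0 => /eqP.
Qed.

Lemma E_sum (I : Type) (r : seq I) (w : I -> C) (q : I -> pt -> C) (xi : 'cV[C]_n) :
  E (fun z => \sum_(l <- r) w l * q l z) xi = fun z => \sum_(l <- r) w l *: E (q l) xi z.
Proof.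
apply: fext => z; rewrite /E /ext0; case: (in_ball z).
  by rewrite scaler_suml; apply: eq_bigr => l _; rewrite scalerA.
by rewrite big1 // => l _; rewrite scaler0.
Qed.

Lemma SP_linprod (w : 'I_d -> 'I_d -> C) (s : seq 'I_d) :
  SP (fun z => \prod_(k <- s) (\sum_l w k l * z 0 l)).
Proof.
elim: s => [|k s IH] xi.
  have -> : E (fun z : pt => \prod_(k <- [::]) (\sum_l w k l * z 0 l)) xi = monom z0a xi.
    rewrite /E /monom; congr ext0; apply: fext => z; by rewrite big_nil zpow_z0.
  exact: Smonom.
have -> : (fun z : pt => \prod_(k0 <- k :: s) (\sum_l w k0 l * z 0 l)) =
  (fun z => \sum_l w k l * (z 0 l * \prod_(k0 <- s) (\sum_l w k0 l * z 0 l))).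
  apply: fext => z; rewrite big_cons mulr_suml; apply: eq_bigr => l _; by rewrite mulrA.
rewrite E_sum; apply: Ssum => l; exact: SP_mul.
Qed.

Definition cnt (s : seq 'I_d) : mindex d := fun l => count_mem l s.

Lemma cnt_nil : cnt [::] = z0a.
Proof. by apply: fext. Qed.

Lemma cnt_cons k s : cnt (k :: s) = addm (cnt s) k.
Proof. apply: fext => l; by rewrite /cnt /addm /= addnC eq_sym. Qed.

Lemma SP0 : SP (fun _ => 0).
Proof.
move=> xi; have -> : E (fun _ : pt => 0) xi = fun _ => 0.
  by apply: fext => z; rewrite /E /ext0 scale0r; case: (in_ball z).
exact: S0.
Qed.

Lemma SP_scale a q : SP q -> SP (fun z => a * q z).
Proof.
move=> Hq; have -> : (fun z : pt => a * q z) = (fun z => a * q z + 0).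
  by apply: fext => z; rewrite addr0.
exact: SP_lin Hq SP0.
Qed.

Definition mv (a : mindex d) (p q : 'I_d) : mindex d := fun l => (a l - (l == p) + (l == q))%N.

Lemma exists_list (a : mindex d) : exists s, cnt s = a.
Proof.
exists (flatten [seq nseq (a k) k | k <- index_enum 'I_d]).
apply: fext => l; rewrite /cnt count_flatten -map_comp sumnE big_map.
rewrite (bigD1 l) //= count_nseq /= eqxx mul1n big1 ?addn0 // => k kl.
by rewrite count_nseq /= (negPf kl).
Qed.

Section Rot.
Variables (i j : 'I_d).
Hypothesis ij : i != j.
Let ji : j != i. Proof. by rewrite eq_sym. Qed.

Definition beta (k : 'I_d) (z : pt) : C :=
  if k == i then z 0 j else if k == j then - z 0 i else 0.

Lemma sum_ij (f : 'I_d -> C) : (forall l, l != i -> l != j -> f l = 0) ->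
  \sum_l f l = f i + f j.
Proof.
move=> H; rewrite (bigD1 i) // (bigD1 j) //= big1 ?addr0 ?addrA // => l /andP[li lj].
exact: H.
Qed.

Section X.
Variable x : C.
Hypothesis x0 : 0 <= x.

Definition cc : C := (sqrtC (1 + x ^+ 2))^-1.
Definition uc (k l : 'I_d) : C :=
  if k == i then (if l == i then cc else if l == j then cc * x else 0)
  else if k == j then (if l == i then - (cc * x) else if l == j then cc else 0)
  else (k == l)%:R.
Definition umat : 'M[C]_d := \matrix_(k, l) uc k l.
Definition sk k := if (k == i) || (k == j) then cc else 1.

Lemma onex_gt0 : 0 < 1 + x ^+ 2.
Proof. apply: (lt_le_trans ltr01); rewrite lerDl; exact: exprn_ge0. Qed.

Lemma cc_ge0 : 0 <= cc.
Proof. by rewrite invr_ge0 sqrtC_ge0 ltW // onex_gt0. Qed.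

Lemma cc2 : cc ^+ 2 * (1 + x ^+ 2) = 1.
Proof. by rewrite exprVn sqrtCK mulVf // gt_eqF // onex_gt0. Qed.

Lemma cc_neq0 : cc != 0.
Proof. apply/eqP => H; have := cc2; rewrite H expr0n mul0r => /eqP; by rewrite eq_sym oner_eq0. Qed.

Lemma ulin k (z : pt) : \sum_l umat k l * z 0 l = sk k * (z 0 k + x * beta k z).
Proof.
rewrite /sk /beta; case: (eqVneq k i) => [->|ki].
  rewrite ?eqxx /= sum_ij => [|l li lj]; last by rewrite !mxE /uc eqxx (negPf li) (negPf lj) mul0r.
  by rewrite !mxE /uc !eqxx (negPf ji); ring.
case: (eqVneq k j) => [->|kj].
  rewrite ?eqxx ?orbT sum_ij => [|l li lj]; last by rewrite !mxE /uc eqxx (negPf ji) (negPf li) (negPf lj) mul0r.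
  by rewrite !mxE /uc !eqxx (negPf ji); ring.
rewrite /= (bigD1 k) //= big1 => [|l lk]; last by rewrite mxE /uc (negPf ki) (negPf kj) eq_sym (negPf lk) mul0r.
by rewrite mxE /uc (negPf ki) (negPf kj) eqxx mul1r addr0 mulr0 addr0 mul1r.
Qed.

Lemma uc_real k l : uc k l \is Num.real.
Proof.
have rc : cc \is Num.real by apply: ger0_real; exact: cc_ge0.
have rx : x \is Num.real by exact: ger0_real.
rewrite /uc; repeat case: eqP => _; by rewrite ?rpredN ?rpredM ?realn ?rpred0 ?rpred1.
Qed.

Lemma adj_umat : adj umat = umat^T.
Proof. by apply/matrixP => a b; rewrite !mxE conj_Creal // uc_real. Qed.

Lemma umat_unitary : unitary_mx umat.
Proof.
have H1 : umat *m adj umat = 1%:M.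
  rewrite adj_umat; apply/matrixP => a b.
  have H := ulin a (row b umat).
  transitivity (\sum_l umat a l * row b umat 0 l).
    by rewrite mxE; apply: eq_bigr => l _; rewrite !mxE.
  rewrite H /beta !mxE /sk /uc.
  case: (eqVneq a i) => [Ea|ai]; [|case: (eqVneq a j) => [Ea|aj]];
  case: (eqVneq b i) => [Eb|bi]; try (case: (eqVneq b j) => [Eb|bj]);
  try subst a; try subst b;
  rewrite ?eqxx ?(negPf ij) ?(negPf ji) ?(negPf ai) ?(negPf aj) ?(negPf bi) ?(negPf bj) /=;
  rewrite ?(eq_sym i b) ?(eq_sym j b) ?(negPf bi) ?(negPf bj);
  rewrite ?(eq_sym b a) /=; try (rewrite -cc2; ring); try ring.
by split => //; exact: mulmx1C.
Qed.
Definition Fs (xi : 'cV[C]_n) (s : seq 'I_d) : Fn :=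
  E (fun z => \prod_(k <- s) (\sum_l umat k l * z 0 l)) xi.

Lemma Fs_cons xi k s : Fs xi (k :: s) = fun z => \sum_l umat k l *: Mz l (Fs xi s) z.
Proof.
apply: fext => z; rewrite /Fs /E /ext0 /Mz; case: (in_ball z); last first.
  by rewrite big1 // => l _; rewrite !scaler0.
rewrite big_cons mulr_suml scaler_suml; apply: eq_bigr => l _; by rewrite !scalerA.
Qed.

Lemma Fs_nil xi : Fs xi [::] = monom z0a xi.
Proof. rewrite /Fs /E /monom; congr ext0; apply: fext => z; by rewrite big_nil zpow_z0. Qed.

Lemma SFs xi s : S (Fs xi s).
Proof. exact: SP_linprod. Qed.

Lemma orth_rot xi eta s t : cnt s <> cnt t -> ip (Fs xi s) (Fs eta t) = 0.
Proof.
move=> st; have [G [[GS Glin Giso Gsurj] Gh]] := Hhom umat_unitary.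
have chain : forall (zeta : 'cV[C]_n) r,
    G (Fs zeta r) = monom (cnt r) (G (monom z0a zeta) 0).
  move=> zeta; elim=> [|k r IH].
    rewrite Fs_nil cnt_nil; exact: (Gconst (And4 GS Glin Giso Gsurj) Gh).
  rewrite Fs_cons -Gh; last exact: SFs. rewrite IH Mz_monom cnt_cons //.
by rewrite -(Giso _ _ (SFs xi s) (SFs eta t)) !chain Horth.
Qed.

Definition gs (xi : 'cV[C]_n) (s : seq 'I_d) : Fn :=
  E (fun z => \prod_(k <- s) (z 0 k + x * beta k z)) xi.

Lemma sk_neq0 k : sk k != 0.
Proof. rewrite /sk; case: ifP => _; [exact: cc_neq0 | exact: oner_neq0]. Qed.

Lemma prod_sk_neq0 (s : seq 'I_d) : \prod_(k <- s) sk k != 0.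
Proof. by rewrite prodf_seq_neq0; apply/allP => k _; exact: sk_neq0. Qed.

Lemma Fs_gs xi s : Fs xi s = fun z => (\prod_(k <- s) sk k) *: gs xi s z.
Proof.
apply: fext => z; rewrite /Fs /gs /E /ext0; case: (in_ball z); last by rewrite scaler0.
rewrite scalerA -big_split /=; congr (_ *: _); apply: eq_bigr => k _; exact: ulin.
Qed.

Lemma Sgs xi s : S (gs xi s).
Proof.
have -> : gs xi s = fun z => (\prod_(k <- s) sk k)^-1 *: Fs xi s z.
  apply: fext => z; rewrite Fs_gs scalerA mulVf ?scale1r //.
  exact: prod_sk_neq0.
apply: Ssc; exact: SFs.
Qed.

Lemma orth_gs xi eta s t : cnt s <> cnt t -> ip (gs xi s) (gs eta t) = 0.
Proof.
move=> st; have H := orth_rot xi eta st.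
have S1 := Sgs xi s; have S2 := Sgs eta t.
rewrite !Fs_gs ipscl in H; last 2 first.
- exact: S1.
- by apply: Ssc.
rewrite ipsclr // in H.
move/eqP: H; rewrite !mulf_eq0 conjC_eq0 (negPf (prod_sk_neq0 s)) (negPf (prod_sk_neq0 t)) /=.
by move/eqP.
Qed.

End X.
Fixpoint qq (s : seq 'I_d) (m : nat) (z : pt) : C :=
  match s with
  | [::] => (m == 0)%:R
  | k :: s' => z 0 k * qq s' m z + (if m is m'.+1 then beta k z * qq s' m' z else 0)
  end.

Lemma qq_big s m (z : pt) : (size s < m)%N -> qq s m z = 0.
Proof.
elim: s m => [|k s IH] m /= hm; first by case: m hm.
case: m hm => [//|m] hm.
by rewrite !IH ?mulr0 ?addr0 //; apply: ltnW.
Qed.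

Lemma prod_exp s (x : C) (z : pt) N : (size s < N)%N ->
  \prod_(k <- s) (z 0 k + x * beta k z) = \sum_(0 <= m < N) x ^+ m * qq s m z.
Proof.
elim: s N => [|k s IH] [|N] //= hN.
  rewrite big_nil big_nat_recl // /= expr0 mulr1.
  by rewrite big1 ?addr0 // => m _; rewrite mulr0.
have e1 := IH N.+1 (ltnW hN).
have e2 := IH N hN.
rewrite big_cons.
transitivity (z 0 k * (\sum_(0 <= m < N.+1) x ^+ m * qq s m z) +
              x * beta k z * (\sum_(0 <= m < N) x ^+ m * qq s m z)).
  by rewrite -e1 -e2; ring.
rewrite [RHS]big_nat_recl // [X in z 0 k * X]big_nat_recl // /= !expr0 !mul1r addr0.
rewrite mulrDr !mulr_sumr -addrA; congr (_ + _).
rewrite -big_split; apply: eq_bigr => m _ /=; rewrite exprS; ring.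
Qed.

Lemma SPqq s m : SP (qq s m).
Proof.
elim: s m => [|k s IH] m /=.
  have -> : (fun _ : pt => (m == 0)%:R : C) = (fun z => (m == 0)%:R * zpow z z0a).
    by apply: fext => z; rewrite zpow_z0 mulr1.
  apply: SP_scale; exact: SP_monom.
have -> : (fun z : pt => z 0 k * qq s m z + (if m is m'.+1 then beta k z * qq s m' z else 0)) =
   (fun z : pt => 1 * (z 0 k * qq s m z) + (if m is m'.+1 then beta k z * qq s m' z else 0)).
  by apply: fext => z; rewrite mul1r.
apply: SP_lin; first exact: SP_mul.
case: m => [|m]; first exact: SP0.
rewrite /beta; case: (eqVneq k i) => [_|ki].
  exact: SP_mul.
case: (eqVneq k j) => [_|kj].
  have -> : (fun z : pt => - z 0 i * qq s m z) = (fun z => (-1) * (z 0 i * qq s m z)).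
    by apply: fext => z; rewrite mulN1r mulNr.
  apply: SP_scale; exact: SP_mul.
have -> : (fun z : pt => 0 * qq s m z) = (fun _ => 0) by apply: fext => z; rewrite mul0r.
exact: SP0.
Qed.

Definition Q (xi : 'cV[C]_n) s m : Fn := E (qq s m) xi.

Lemma gs_exp (x : C) xi s N : (size s < N)%N ->
  gs x xi s = fun z => \sum_(0 <= m < N) x ^+ m *: Q xi s m z.
Proof.
move=> hN; apply: fext => z; rewrite /gs /Q /E /ext0; case: (in_ball z); last first.
  by rewrite big1 // => m _; rewrite scaler0.
rewrite (prod_exp _ _ hN) scaler_suml; apply: eq_bigr => m _; by rewrite scalerA.
Qed.

Definition Pp xi eta s t N : {poly C} :=
  \sum_(0 <= m < N) \sum_(0 <= m' < N) ip (Q xi s m) (Q eta t m') *: 'X^(m + m').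

Lemma Pp_eval xi eta s t N (x : C) : 0 <= x -> (size s < N)%N -> (size t < N)%N ->
  (Pp xi eta s t N).[x] = ip (gs x xi s) (gs x eta t).
Proof.
move=> x0 hs ht.
have xr : x^* = x by apply: conj_Creal; exact: ger0_real.
rewrite (gs_exp x xi hs) (gs_exp x eta ht) ipsum; last 2 first.
- move=> m; exact: SPqq.
- apply: Ssum => m; exact: SPqq.
rewrite /Pp horner_sum; apply: eq_bigr => m _.
rewrite ipsumr; last 2 first.
- move=> m'; exact: SPqq.
- exact: SPqq.
rewrite horner_sum mulr_sumr; apply: eq_bigr => m' _.
rewrite hornerZ hornerXn rmorphXn /= xr exprD; ring.
Qed.

Lemma ijP : i <> j. Proof. by apply/eqP. Qed.

Ltac mxsolve := apply: fext => l; rewrite /mv /addm;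
  repeat (case: eqP => /= ?); subst; (try by case: ijP);
  (try match goal with H : is_true (?u != ?u) |- _ => by rewrite eqxx in H end); try lia.

Lemma qq0 s (z : pt) : qq s 0 z = zpow z (cnt s).
Proof.
elim: s => [|k s IH] /=; first by rewrite cnt_nil zpow_z0.
by rewrite IH addr0 cnt_cons zpow_addm.
Qed.

Lemma cz (a : mindex d) (p q : 'I_d) (z : pt) : p != q ->
  (a p)%:R * zpow z (addm (mv a p q) p) = (a p)%:R * zpow z (addm a q) :> C.
Proof.
move=> pq; case: (posnP (a p)) => [->|ap]; first by rewrite !mul0r.
congr (_ * zpow z _); apply: fext => l; rewrite /mv /addm.
case: (eqVneq l p) => [->|lp]; first by rewrite (negPf pq) /=; lia.
by rewrite /= subn0 addn0.
Qed.

Lemma qq1 s (z : pt) : qq s 1 z =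
  (cnt s i)%:R * zpow z (mv (cnt s) i j) - (cnt s j)%:R * zpow z (mv (cnt s) j i).
Proof.
elim: s => [|k s IH]; first by rewrite /= !mul0r subrr.
have -> : qq (k :: s) 1 z = z 0 k * qq s 1 z + beta k z * qq s 0 z by [].
rewrite IH qq0 !cnt_cons; set a := cnt s.
rewrite /beta.
case: (eqVneq k i) => [ki|ki].
  subst k.
  have e1 : addm a i i = (a i).+1 by rewrite /addm eqxx addn1.
  have e2 : addm a i j = a j by rewrite /addm (negPf ji) addn0.
  have e3 : mv (addm a i) i j = addm a j by mxsolve.
  have e4 : mv (addm a i) j i = addm (mv a j i) i by mxsolve.
  rewrite e1 e2 e3 e4 mulrBr.
  rewrite [z 0 i * (_ * zpow z (mv a i j))]mulrCA -(zpow_addm z (mv a i j) i) cz //.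
  rewrite [z 0 i * (_ * zpow z (mv a j i))]mulrCA -(zpow_addm z (mv a j i) i).
  rewrite (zpow_addm z a j) -natr1; ring.
case: (eqVneq k j) => [kj|kj].
  subst k.
  have e1 : addm a j j = (a j).+1 by rewrite /addm eqxx addn1.
  have e2 : addm a j i = a i by rewrite /addm (negPf ij) addn0.
  have e3 : mv (addm a j) i j = addm (mv a i j) j by mxsolve.
  have e4 : mv (addm a j) j i = addm a i by mxsolve.
  rewrite e1 e2 e3 e4 mulrBr.
  rewrite [z 0 j * (_ * zpow z (mv a j i))]mulrCA -(zpow_addm z (mv a j i) j) cz //.
  rewrite [z 0 j * (_ * zpow z (mv a i j))]mulrCA -(zpow_addm z (mv a i j) j).
  rewrite (zpow_addm z a i) -natr1; ring.
have e1 : addm a k i = a i by rewrite /addm eq_sym (negPf ki) addn0.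
have e2 : addm a k j = a j by rewrite /addm eq_sym (negPf kj) addn0.
have e3 : mv (addm a k) i j = addm (mv a i j) k by mxsolve.
have e4 : mv (addm a k) j i = addm (mv a j i) k by mxsolve.
rewrite e1 e2 e3 e4 !zpow_addm; ring.
Qed.

Lemma Pp_zero xi eta s t N : cnt s <> cnt t -> (size s < N)%N -> (size t < N)%N ->
  Pp xi eta s t N = 0.
Proof.
move=> st hs ht; apply/eqP; apply: contraT => nz.
set P := Pp xi eta s t N.
have := @max_poly_roots _ P [seq (r%:R : C) | r <- iota 0 (size P)] nz.
rewrite size_map size_iota ltnn; apply.
  apply/allP => y /mapP [r _ ->]; rewrite /root /P Pp_eval ?ler0n //.
  by rewrite orth_gs ?ler0n.
rewrite map_inj_uniq ?iota_uniq // => a b /eqP; by rewrite eqr_nat => /eqP.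
Qed.

Lemma inner_k (f : nat -> C) k N : \sum_(0 <= m' < N.+2) f m' * (1%N == (k + m')%N)%:R =
  if k == 0%N then f 1%N else if k == 1%N then f 0%N else 0.
Proof.
rewrite big_nat_recl // big_nat_recl // big1 ?addr0; last first.
  by move=> m _; rewrite addnS addnS /= mulr0.
by case: k => [|[|k]] /=; rewrite ?mulr0 ?mulr1 ?add0r ?addr0 ?addnS /= ?mulr0 ?addr0.
Qed.

Lemma Pp_coef1 xi eta s t N : (Pp xi eta s t N.+2)`_1 =
  ip (Q xi s 0) (Q eta t 1) + ip (Q xi s 1) (Q eta t 0).
Proof.
rewrite /Pp coef_sum.
under eq_bigr do rewrite coef_sum.
under eq_bigr do under eq_bigr do rewrite coefZ coefXn.
under eq_bigr do rewrite inner_k.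
rewrite big_nat_recl // big_nat_recl // big1 ?addr0 //.
Qed.

Lemma Q0 xi s : Q xi s 0 = monom (cnt s) xi.
Proof. rewrite /Q /E /monom; congr ext0; apply: fext => z; by rewrite qq0. Qed.

Lemma Q1 xi s : Q xi s 1 = fun z => (cnt s i)%:R *: monom (mv (cnt s) i j) xi z -
   (cnt s j)%:R *: monom (mv (cnt s) j i) xi z.
Proof.
apply: fext => z; rewrite /Q /E /monom /ext0; case: (in_ball z).
  by rewrite qq1 scalerBl !scalerA.
by rewrite !scaler0 subrr.
Qed.

Lemma rel_ij (a : mindex d) (xi eta : 'cV[C]_n) : (0 < a j)%N ->
  (a i).+1%:R * ip (monom a xi) (monom a eta) =
  (a j)%:R * ip (monom (mv a j i) xi) (monom (mv a j i) eta).
Proof.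
move=> aj; have [s hs] := exists_list a; have [t ht] := exists_list (mv a j i).
have st : cnt s <> cnt t.
  rewrite hs ht => H; have := congr1 (fun f => f i) H; rewrite /mv eqxx (negPf ij) /=; lia.
have h1 : (size s < (size s + size t).+2)%N by lia.
have h2 : (size t < (size s + size t).+2)%N by lia.
have := congr1 (fun p : {poly C} => p`_1) (@Pp_zero xi eta s t (size s + size t).+2 st h1 h2).
rewrite coef0 Pp_coef1 !Q0 !Q1 hs ht.
have Sm := Smonom.
rewrite ipsubr ?ipsclr; try (apply: Ssc; exact: Sm); try exact: Sm.
rewrite ipsub ?ipscl; try (apply: Ssc; exact: Sm); try exact: Sm.
have e1 : mv (mv a j i) i j = a by mxsolve.
rewrite e1 [ip (monom a xi) (monom (mv (mv a j i) j i) eta)]Horth; last first.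
  move=> H; have := congr1 (fun f => f i) H; rewrite /mv eqxx (negPf ij) /=; lia.
rewrite [ip (monom (mv a i j) xi) _]Horth; last first.
  move=> H; have := congr1 (fun f => f i) H; rewrite /mv eqxx (negPf ij) /=; lia.
rewrite !rmorph_nat /mv eqxx (negPf ij) /= subn0 addn1 !mulr0 subr0 add0r => /eqP.
by rewrite subr_eq0 => /eqP.
Qed.

End Rot.

Definition mk (l : nat) : mindex d := fun k => if val k == 0%N then l else 0%N.

Section Pos.
Variables (o : 'I_d).
Hypothesis o0 : val o = 0%N.

Lemma mk_o l k : mk l k = if k == o then l else 0%N.
Proof.
rewrite /mk; case: (eqVneq k o) => [->|ko]; first by rewrite o0 eqxx.
case: eqP => // kv; case/eqP: ko; apply: val_inj; by rewrite kv o0.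
Qed.

Definition Fprop (a : mindex d) := forall xi eta : 'cV[C]_n,
  (mdeg a)`!%:R * ip (monom a xi) (monom a eta) =
  (mfact a)%:R * ip (monom (mk (mdeg a)) xi) (monom (mk (mdeg a)) eta).

Lemma mv_deg (a : mindex d) k : k != o -> (0 < a k)%N ->
  mdeg (mv a k o) = mdeg a /\ (mfact (mv a k o) * a k = mfact a * (a o).+1)%N.
Proof.
move=> ko ak; have ok : o != k by rewrite eq_sym.
have E1 : forall l, l != o -> l != k -> mv a k o l = a l.
  by move=> l lo lk; rewrite /mv (negPf lo) (negPf lk) subn0 addn0.
have Eo : mv a k o o = (a o).+1 by rewrite /mv eqxx (negPf ok) subn0 addn1.
have Ek : mv a k o k = (a k).-1 by rewrite /mv eqxx (negPf ko) subn1 addn0.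
split.
  rewrite /mdeg (bigD1 o) // (bigD1 k) //= [in RHS](bigD1 o) // [in RHS](bigD1 k) //=.
  rewrite Eo Ek; under eq_bigr => l /andP[lo lk] do rewrite E1 //.
  lia.
rewrite /mfact (bigD1 o) // (bigD1 k) //= [in RHS](bigD1 o) // [in RHS](bigD1 k) //=.
rewrite Eo Ek; under eq_bigr => l /andP[lo lk] do rewrite E1 //.
case: (a k) ak => [//|ak'] _ /=.
rewrite !factS; set P := \prod_(i0 | (i0 != o) && (i0 != k)) _; rewrite [RHS]mulnC; lia.
Qed.

Lemma Fmain m : forall a, (mdeg a - a o)%N = m -> Fprop a.
Proof.
elim: m => [|m IH] a ha xi eta.
  have hs : (\sum_(k | k != o) a k = 0)%N.
    by move: ha; rewrite /mdeg (bigD1 o) //= addKn.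
  have hz : forall k, k != o -> a k = 0%N.
    move=> k ko; move/eqP: hs; rewrite sum_nat_eq0 => /forallP /(_ k).
    by rewrite ko => /eqP.
  have hd : mdeg a = a o by rewrite /mdeg (bigD1 o) //= hs addn0.
  have amk : a = mk (mdeg a).
    apply: fext => k; rewrite mk_o; case: eqP => [->|/eqP ko]; first by rewrite hd.
    exact: hz.
  have mf : mfact a = (mdeg a)`!.
    rewrite /mfact (bigD1 o) //= big1 ?muln1 ?hd // => k ko; by rewrite hz.
  by rewrite -amk mf mulrC.
have [k ko ak] : exists2 k, (k != o) & (a k != 0%N).
  apply/exists_inP; rewrite -negb_forall_in; apply/negP => /forall_inP H.
  have : (\sum_(k | k != o) a k = 0)%N.
    by apply/eqP; rewrite sum_nat_eq0; apply/forall_inP => k /H.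
  by move: ha; rewrite /mdeg (bigD1 o) //= addKn => ->.
have ak0 : (0 < a k)%N by rewrite lt0n.
have ok : o != k by rewrite eq_sym.
have [hd hf] := mv_deg ko ak0.
have R1 := rel_ij ok xi eta ak0.
have ha' : (mdeg (mv a k o) - mv a k o o)%N = m.
  by rewrite hd /mv eqxx (negPf ok) subn0 addn1; lia.
have IH' := IH _ ha' xi eta; rewrite hd in IH'.
apply: (mulfI (x := (a o).+1%:R)); first by rewrite pnatr_eq0.
rewrite [LHS]mulrCA R1 [LHS]mulrCA IH' mulrA -natrM mulnC hf natrM; ring.
Qed.

End Pos.

Lemma cdot_scale c (x y : 'cV[C]_n) : cdot (c *: x) y = c * cdot x y.
Proof. rewrite /cdot mulr_sumr; apply: eq_bigr => k _; by rewrite mxE mulrA. Qed.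

Lemma posdef_scale (c : C) (B : 'M[C]_n) : 0 < c -> posdef B -> posdef (c *: B).
Proof.
move=> c0 [hB pB]; have cr : c^* = c by apply: conj_Creal; exact: gtr0_real.
split.
  apply/matrixP => a b; move/matrixP: hB => /(_ a b); rewrite /adj !mxE => <-.
  by rewrite rmorphM /= cr.
move=> xi xi0; rewrite -scalemxAl cdot_scale; apply: mulr_gt0 => //; exact: pB.
Qed.

Lemma final : exists A : nat -> 'M[C]_n,
    (forall l, posdef (A l)) /\
    forall (a : mindex d) (xi : 'cV[C]_n),
      ip (monom a xi) (monom a xi) = (mfact a)%:R * cdot (A (mdeg a) *m xi) xi.
Proof.
exists (fun l => ((l`!)%:R)^-1 *: Bmat (mk l)); split.
  move=> l; apply: posdef_scale; last exact: Bpos.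
  by rewrite invr_gt0 ltr0n fact_gt0.
move=> a xi; rewrite -scalemxAl cdot_scale -Brep.
case: (posnP d) => [d0|dpos].
  have amk : a = mk 0.
    by apply: fext => k; move: (ltn_ord k); rewrite {2}d0.
  have -> : mdeg a = 0%N by rewrite /mdeg big1 // => k _; move: (ltn_ord k); rewrite {2}d0.
  have -> : mfact a = 1%N by rewrite /mfact big1 // => k _; move: (ltn_ord k); rewrite {2}d0.
  by rewrite -amk invr1 !mul1r.
pose o := Ordinal dpos.
have := @Fmain o erefl _ a erefl xi xi.
move=> H; rewrite [RHS]mulrCA -H mulrA mulVf ?mul1r //.
by rewrite pnatr_eq0 -lt0n fact_gt0.
Qed.

End Main.

Unset Implicit Arguments.

Theorem theorem4p10 (R : realType) (d n : nat)
  (S : Fun R d n -> Prop) (ip : Fun R d n -> Fun R d n -> R[i])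
  (HS : is_RKHS_hol S ip)
  (Hdense : poly_dense S ip)
  (Horth : forall (a b : mindex d) (xi eta : 'cV[R[i]]_n), a <> b ->
     ip (monom a xi) (monom b eta) = 0)
  (Hbdd : M_bounded S ip)
  (Hhom : Ud_homogeneous S ip) :
  exists A : nat -> 'M[R[i]]_n,
    (forall l, posdef (A l)) /\
    forall (a : mindex d) (xi : 'cV[R[i]]_n),
      ip (monom a xi) (monom a xi) = (mfact a)%:R * cdot (A (mdeg a) *m xi) xi.
Proof.
exact: (final HS Hdense Horth Hbdd Hhom).
Qed.
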